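(* Let $\alpha>1$. Let $\mathcal{A}:\mathcal{D}\mapsto(\mathcal{A}_1(\mathcal{D}),\mathcal{A}_2(\mathcal{D}))\in\mathcal{Z}_1\times\mathcal{Z}_2$ be a randomized algorithm whose first output satisfies $D_\alpha(\mathcal{A}_1(\mathcal{D})\,\|\,\mathcal{A}_1(\mathcal{D}'))\le\varepsilon_1$ for all adjacent datasets $\mathcal{D},\mathcal{D}'$ (the two outputs $\mathcal{A}_1(\mathcal{D}),\mathcal{A}_2(\mathcal{D})$ may be dependent). Let $\mathcal{B}:\mathcal{Z}_1\times\mathcal{Z}_2\to\mathcal{W}$ be a randomized algorithm satisfying $\sup_{\mathbf{z}_1,\mathbf{z}_2,\mathbf{z}_2'}D_\alpha(\mathcal{B}(\mathbf{z}_1,\mathbf{z}_2)\,\|\,\mathcal{B}(\mathbf{z}_1,\mathbf{z}_2'))\le\varepsilon_2$. Assume the randomness used by $\mathcal{A}$ and $\mathcal{B}$ is independent (and that all relevant densities exist). Then for all adjacent $\mathcal{D},\mathcal{D}'$, $$D_\alpha\big((\mathcal{A}_1(\mathcal{D}),\mathcal{B}(\mathcal{A}(\mathcal{D})))\,\big\|\,(\mathcal{A}_1(\mathcal{D}'),\mathcal{B}(\mathcal{A}(\mathcal{D}')))\big)\le\varepsilon_1+\varepsilon_2,$$ i.e. the pair jointly satisfies $(\alpha,\varepsilon_1+\varepsilon_2)$-Rényi DP.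
   Context: For $\alpha>1$ the Rényi divergence between random variables $X\sim P$, $Y\sim Q$ is $D_\alpha(X\|Y)=\frac{1}{\alpha-1}\log\mathbb{E}_{x\sim Q}[(P(x)/Q(x))^\alpha]$. An algorithm is $(\alpha,\varepsilon)$-Rényi DP if its output distributions on any two adjacent datasets have Rényi divergence of order $\alpha$ at most $\varepsilon$; here ''adjacent'' refers to an arbitrary fixed symmetric adjacency relation on datasets. *)

(* Defs.v *)
From HB Require Import structures.
From mathcomp Require Import all_boot all_order all_algebra.
From mathcomp Require Import all_classical all_reals all_analysis.
Set Implicit Arguments. Unset Strict Implicit. Unset Printing Implicit Defensive.
Import Order.TTheory GRing.Theory Num.Theory.
Import numFieldNormedType.Exports.
Local Open Scope classical_set_scope.
Local Open Scope ring_scope.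

Section Renyi.
Context (R : realType) (d : measure_display) (T : measurableType d).

Definition is_density (mu : {measure set T -> \bar R}) (p : T -> R) : Prop :=
  [/\ measurable_fun setT p, (forall x, 0 <= p x) &
      (\int[mu]_x (p x)%:E = 1)%E].

(* Rényi divergence of order [a] (a > 1) between the distributions with
   densities [p] (for P) and [q] (for Q) w.r.t. [mu]:
     D_a(P||Q) = 1/(a-1) * log E_{x~Q}[(p x / q x)^a]
               = 1/(a-1) * log \int p^a q^(1-a) dmu,
   and D_a(P||Q) = +oo when P is not absolutely continuous w.r.t. Q
   (or the integral is infinite). *)
Definition renyi_div (mu : {measure set T -> \bar R}) (a : R) (p q : T -> R)
    : \bar R :=
  if `[< {ae mu, forall x, q x = 0 -> p x = 0} >] then
    let I := (\int[mu]_x (p x `^ a * q x `^ (1 - a))%:E)%E in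
    if I == +oo%E then +oo%E else ((a - 1)^-1 * ln (fine I))%:E
  else +oo%E.

End Renyi.

Section Composition.
Context (R : realType) (Dat : Type)
  (d1 d2 dw : measure_display)
  (Z1 : measurableType d1) (Z2 : measurableType d2) (W : measurableType dw)
  (mu2 : {measure set Z2 -> \bar R}).

(* density of the first output A_1(D): marginal of the joint density of
   A(D) = (A_1(D), A_2(D)) *)
Definition marginal1 (pA : Dat -> Z1 * Z2 -> R) (D : Dat) : Z1 -> R :=
  fun z1 => fine (\int[mu2]_z2 (pA D (z1, z2))%:E)%E.

(* density of (A_1(D), B(A(D))), where B uses randomness independent of A:
   (z1, w) |-> \int p_D(z1, z2) q_{(z1,z2)}(w) dmu2(z2) *)
Definition out_density (pA : Dat -> Z1 * Z2 -> R) (qB : Z1 -> Z2 -> W -> R)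
    (D : Dat) : Z1 * W -> R :=
  fun zw => fine (\int[mu2]_z2 (pA D (zw.1, z2) * qB zw.1 z2 zw.2)%:E)%E.

End Composition.

(* Main.v *)
Require Import Defs.
From HB Require Import structures.
From mathcomp Require Import all_boot all_order all_algebra.
From mathcomp Require Import all_classical all_reals all_analysis.
From mathcomp Require Import measurable_realfun.
From mathcomp Require Import ring lra.
Import Order.TTheory GRing.Theory Num.Theory.
Import numFieldNormedType.Exports.
Local Open Scope classical_set_scope.
Local Open Scope ring_scope.
Section Scalar.
Context (R : realType).
Implicit Types (a x y c s m : R).

Definition phi a x y : R := x `^ a * y `^ (1 - a).
Definition Phi a x y : \bar R :=
  if (y == 0) && (0 < x) then +oo%E else (phi a x y)%:E.

Lemma phi_ge0 a x y : 0 <= phi a x y.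
Proof. by rewrite /phi mulr_ge0 // powR_ge0. Qed.

Lemma Phi_ge0 a x y : (0 <= Phi a x y)%E.
Proof. by rewrite /Phi; case: ifP => _ //; rewrite lee_fin phi_ge0. Qed.

Lemma phi0l a y : a != 0 -> phi a 0 y = 0.
Proof. by move=> a0; rewrite /phi powR0 ?mul0r. Qed.

Lemma phi0r a x : a != 1 -> phi a x 0 = 0.
Proof. by move=> a1; rewrite /phi powR0 ?mulr0 // subr_eq0 eq_sym. Qed.

Lemma bernoulli_powR a s : 1 <= a -> 0 <= s -> 1 + a * (s - 1) <= s `^ a.
Proof.
move=> a1 s0; have [->|sgt0] := eqVneq s 0.
  rewrite powR0 ?gt_eqF ?(lt_le_trans ltr01) //.
  by rewrite sub0r mulrN1 subr_le0.
have spos : 0 < s by rewrite lt_neqAle eq_sym sgt0.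
have h1 : 1 + (a - 1) * ln s <= s `^ (a - 1).
  by rewrite /powR (negbTE sgt0) expR_ge1Dx.
have h2 : - ln s <= s^-1 - 1.
  have := @le_ln1Dx R (s^-1 - 1).
  have -> : 1 + (s^-1 - 1) = s^-1 by ring.
  rewrite lnV ?posrE //; apply; have : 0 < s^-1 by rewrite invr_gt0.
  lra.
have h3 : s - 1 <= s * ln s.
  have := ler_wpM2l (ltW spos) h2.
  rewrite mulrBr mulfV ?gt_eqF // mulr1 mulrN; lra.
have e : s `^ a = s * s `^ (a - 1) by rewrite mulr_powRB1 // (lt_le_trans ltr01).
rewrite e.
have h4 : s * (1 + (a - 1) * ln s) <= s * s `^ (a - 1) by rewrite ler_wpM2l // ltW.
have h5 : (a - 1) * (s - 1) <= (a - 1) * (s * ln s) by rewrite ler_wpM2l // subr_ge0.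
nra.
Qed.
End Scalar.
Arguments phi {R}.
Arguments Phi {R}.
Section Scalar2.
Context (R : realType).
Implicit Types (a x y c s m : R).

Lemma phi_scale_pos a x y : 0 <= x -> 0 < y -> phi a x y = (x / y) `^ a * y.
Proof.
move=> x0 y0; rewrite /phi; set t := x / y.
have -> : x = t * y by rewrite /t divfK ?gt_eqF.
have t0 : 0 <= t by rewrite divr_ge0 // ltW.
rewrite powRM // ?ltW // -mulrA; congr (_ * _).
rewrite -powRD; last by apply/implyP => _; rewrite gt_eqF.
by rewrite addrC subrK powRr1 // ltW.
Qed.

Lemma tangent a x y c : 1 < a -> 0 <= x -> 0 < y -> 0 <= c ->
  c `^ a * y + a * c `^ (a - 1) * x <= phi a x y + a * c `^ a * y.
Proof.
move=> a1 x0 y0 c0; rewrite phi_scale_pos //.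
set t := x / y.
have t0 : 0 <= t by rewrite divr_ge0 // ltW.
have -> : x = t * y by rewrite /t divfK ?gt_eqF.
have [->|cn0] := eqVneq c 0.
  rewrite !powR0 ?gt_eqF ?subr_gt0 ?(lt_trans ltr01) //.
  rewrite !(mulr0, mul0r, add0r, addr0); apply: mulr_ge0; [exact: powR_ge0|exact: ltW].
have cp : 0 < c by rewrite lt_neqAle eq_sym cn0.
set s := t / c.
have s0 : 0 <= s by rewrite divr_ge0.
have ets : t = s * c by rewrite /s divfK.
rewrite ets powRM //.
have e2 : c `^ (a - 1) * (s * c * y) = c `^ a * s * y.
  rewrite -(mulr_powRB1 c0 (lt_trans ltr01 a1)); ring.
rewrite -mulrA e2.
have hb := @bernoulli_powR R a s (ltW a1) s0.
have ca0 : 0 <= c `^ a * y by rewrite mulr_ge0 ?powR_ge0 ?ltW.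
have := ler_wpM2l ca0 hb.
move: (c `^ a) (s `^ a) => C S; nra.
Qed.

Lemma phi_scale a x y m m' : 0 <= x -> 0 <= y -> 0 < m -> 0 < m' ->
  phi a (x / m') (y / m) = m' `^ (- a) * m `^ (a - 1) * phi a x y.
Proof.
move=> x0 y0 m0 m'0.
have m'i : 0 <= m'^-1 by rewrite invr_ge0 ltW.
have mi : 0 <= m^-1 by rewrite invr_ge0 ltW.
rewrite /phi !powRM //.
have e1 : m'^-1 `^ a = m' `^ (- a).
  by rewrite powRN -powR_inv1 ?ltW // -powRrM mulN1r powRN.
have e2 : m^-1 `^ (1 - a) = m `^ (a - 1).
  by rewrite -powR_inv1 ?ltW // -powRrM mulN1r opprB.
rewrite e1 e2; ring.
Qed.

Lemma Phi_tangent a x y c m m' : 1 < a -> 0 <= x -> 0 <= y -> 0 <= c ->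
  0 < m -> 0 < m' ->
  ((c `^ a * (y / m) + a * c `^ (a - 1) * (x / m'))%:E <=
   (m' `^ (- a) * m `^ (a - 1))%:E * Phi a x y + (a * c `^ a * (y / m))%:E)%E.
Proof.
move=> a1 x0 y0 c0 m0 m'0.
have k0 : 0 < m' `^ (- a) * m `^ (a - 1) by rewrite mulr_gt0 ?powR_gt0.
rewrite /Phi; case: ifPn => [_|].
  by rewrite gt0_muley ?lte_fin // addye ?leey.
rewrite negb_and => /orP[yn0|].
  have yp : 0 < y by rewrite lt_neqAle eq_sym yn0.
  rewrite -EFinM -EFinD lee_fin -phi_scale //.
  apply: tangent => //; [exact: divr_ge0 (ltW m'0)|exact: divr_gt0].
rewrite -real_leNgt ?num_real // => xle0; have -> : x = 0 by apply/le_anti; rewrite xle0.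
have [->|yn0] := eqVneq y 0.
  rewrite phi0l ?gt_eqF ?(lt_trans ltr01) // !(mul0r, mulr0, addr0).
  by rewrite mule0.
have yp : 0 < y by rewrite lt_neqAle eq_sym yn0.
rewrite -EFinM -EFinD lee_fin -phi_scale //.
have := @tangent a 0 (y / m) c a1 (lexx 0) (divr_gt0 yp m0) c0.
by rewrite mul0r.
Qed.
End Scalar2.
Section Generic.
Context (R : realType) d (T : measurableType d) (mu : {measure set T -> \bar R}).
Local Open Scope ereal_scope.

Lemma measurable_phi (a : R) (u v : T -> R) : measurable_fun setT u ->
  measurable_fun setT v -> measurable_fun setT (fun x => phi a (u x) (v x)).
Proof.
move=> mu' mv; rewrite /phi; apply: measurable_funM.
  exact: (measurableT_comp (measurable_powR _) mu').
exact: (measurableT_comp (measurable_powR _) mv).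
Qed.

Lemma measurable_Phi (a : R) (u v : T -> R) : measurable_fun setT u ->
  measurable_fun setT v -> measurable_fun setT (fun x => Phi a (u x) (v x)).
Proof.
move=> mu' mv; rewrite /Phi; apply: measurable_fun_ifT.
- apply: measurable_and.
    by apply: measurable_fun_eqr => //; exact: measurable_cst.
  by apply: measurable_fun_ltr => //; exact: measurable_cst.
- exact: measurable_cst.
- by apply: measurableT_comp => //; exact: measurable_phi.
Qed.

Lemma renyi_extract (a : R) (p q : T -> R) (e : R) : (1 < a)%R ->
  renyi_div mu a p q <= e%:E ->
  {ae mu, forall x, q x = 0%R -> p x = 0%R} /\
  \int[mu]_x (phi a (p x) (q x))%:E <= (expR ((a - 1) * e))%:E.
Proof.
move=> a1; rewrite /renyi_div; case: asboolP => [hae|_]; last by rewrite leye_eq.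
set I := \int[mu]_x _.
case: eqP => [_|hI]; first by rewrite leye_eq.
rewrite lee_fin => h; split => //.
have I0 : 0 <= I by apply: integral_ge0 => x _; rewrite lee_fin mulr_ge0 // powR_ge0.
have fI : I \is a fin_num by rewrite ge0_fin_numE // ltey; apply/eqP.
rewrite /I -/I -(fineK fI) lee_fin.
have a0 : (0 < a - 1)%R by rewrite subr_gt0.
have h' : (ln (fine I) <= (a - 1) * e)%R by rewrite -ler_pdivrMl.
have [Ip|Inp] := ltP 0%R (fine I).
  by rewrite -ler_ln ?posrE ?expR_gt0 // expRK.
exact: (le_trans Inp (expR_ge0 _)).
Qed.

Lemma renyi_bound (a : R) (p q : T -> R) (e : R) : (1 < a)%R -> (0 <= e)%R ->
  {ae mu, forall x, q x = 0%R -> p x = 0%R} ->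
  \int[mu]_x (phi a (p x) (q x))%:E <= (expR ((a - 1) * e))%:E ->
  renyi_div mu a p q <= e%:E.
Proof.
move=> a1 e0 hae hI; rewrite /renyi_div asboolT //.
set I := \int[mu]_x _.
have I0 : 0 <= I by apply: integral_ge0 => x _; rewrite lee_fin mulr_ge0 // powR_ge0.
have Ifin : I \is a fin_num.
  by rewrite ge0_fin_numE // (le_lt_trans hI) ?ltey.
rewrite ifF; last by apply/negbTE; rewrite -ltey -ge0_fin_numE.
rewrite lee_fin.
have a0 : (0 < a - 1)%R by rewrite subr_gt0.
rewrite ler_pdivrMl //.
have [Ip|Inp] := ltP 0%R (fine I).
  rewrite -ler_expR lnK ?posrE //.
  by rewrite -lee_fin fineK.
by rewrite ln0 // mulr_ge0 // ltW.
Qed.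

Lemma renyi_ge0 (a : R) (p q : T -> R) : (1 < a)%R ->
  is_density mu p -> is_density mu q -> 0 <= renyi_div mu a p q.
Proof.
move=> a1 [mp p0 ip] [mq q0 iq]; rewrite /renyi_div.
case: asboolP => [hae|_] //.
set I := \int[mu]_x _.
have I0 : 0 <= I by apply: integral_ge0 => x _; rewrite lee_fin mulr_ge0 // powR_ge0.
have a0 : (0 < a)%R by rewrite (lt_trans ltr01).
have key : \int[mu]_x (q x + a * p x)%:E <= \int[mu]_x ((phi a (p x) (q x))%:E + (a * q x)%:E).
  apply: ae_ge0_le_integral => //.
  - by move=> x _; rewrite lee_fin addr_ge0 // mulr_ge0 // ltW.
  - apply/measurable_EFinP; apply: measurable_funD => //.
    exact: measurable_funM.
  - by move=> x _; rewrite adde_ge0 // lee_fin ?phi_ge0 // mulr_ge0 // ltW.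
  - apply: emeasurable_funD; apply/measurable_EFinP; first exact: measurable_phi.
    exact: measurable_funM.
  apply: filterS hae => x hx _; rewrite -EFinD lee_fin.
  have [qx0|qxn0] := eqVneq (q x) 0%R.
    rewrite qx0 (hx qx0) !(mulr0, addr0); exact: phi_ge0.
  have qp : (0 < q x)%R by rewrite lt_neqAle eq_sym qxn0 q0.
  have := @tangent R a (p x) (q x) 1 a1 (p0 x) qp ler01.
  by rewrite !powR1 !mul1r mulr1.
have mpE : measurable_fun setT (fun x => (p x)%:E) by exact/measurable_EFinP.
have mqE : measurable_fun setT (fun x => (q x)%:E) by exact/measurable_EFinP.
have p0E : forall x, setT x -> 0 <= (p x)%:E by move=> x _; rewrite lee_fin.
have q0E : forall x, setT x -> 0 <= (q x)%:E by move=> x _; rewrite lee_fin.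
have a0' : (0 <= a)%R by exact: ltW.
move: key; rewrite ge0_integralD //; last 4 first.
  - by move=> x _; rewrite lee_fin phi_ge0.
  - by apply/measurable_EFinP; exact: measurable_phi.
  - by move=> x _; rewrite lee_fin mulr_ge0 // ltW.
  - by apply/measurable_EFinP; exact: measurable_funM.
rewrite (eq_integral (fun x => (q x)%:E + a%:E * (p x)%:E)); last by move=> x _; rewrite EFinD EFinM.
rewrite ge0_integralD //; last 2 first.
  - by move=> x _; rewrite mule_ge0 // lee_fin ?(ltW a0).
  - by apply: emeasurable_funM => //; exact/measurable_EFinP.
rewrite ge0_integralZl_EFin //.
under [X in _ <= _ + X]eq_integral do rewrite EFinM.
rewrite ge0_integralZl_EFin //.
rewrite ip iq mule1 leeD2rE // => I1.
case: eqP => // /eqP Iy.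
have fI : I \is a fin_num by rewrite ge0_fin_numE // ltey.
rewrite lee_fin; apply: mulr_ge0.
  by rewrite invr_ge0 subr_ge0 ltW.
by apply: ln_ge0; rewrite -lee_fin fineK.
Qed.

Lemma integral_lin2 (u v : T -> R) (r s : R) : measurable_fun setT u ->
  measurable_fun setT v -> (forall x, 0 <= u x)%R -> (forall x, 0 <= v x)%R ->
  (0 <= r)%R -> (0 <= s)%R ->
  \int[mu]_x (r * u x + s * v x)%:E =
  r%:E * \int[mu]_x (u x)%:E + s%:E * \int[mu]_x (v x)%:E.
Proof.
move=> mu' mv u0 v0 r0 s0.
have muE : measurable_fun setT (fun x => (u x)%:E) by exact/measurable_EFinP.
have mvE : measurable_fun setT (fun x => (v x)%:E) by exact/measurable_EFinP.
have u0E : forall x, setT x -> 0 <= (u x)%:E by move=> x _; rewrite lee_fin.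
have v0E : forall x, setT x -> 0 <= (v x)%:E by move=> x _; rewrite lee_fin.
under eq_integral do rewrite EFinD !EFinM.
have h1 : forall x, setT x -> 0 <= r%:E * (u x)%:E.
  by move=> x _; rewrite mule_ge0 // lee_fin.
have h2 : forall x, setT x -> 0 <= s%:E * (v x)%:E.
  by move=> x _; rewrite mule_ge0 // lee_fin.
have h3 : measurable_fun setT (fun x => r%:E * (u x)%:E).
  by apply: emeasurable_funM => //; exact: measurable_cst.
have h4 : measurable_fun setT (fun x => s%:E * (v x)%:E).
  by apply: emeasurable_funM => //; exact: measurable_cst.
by rewrite ge0_integralD // !ge0_integralZl_EFin.
Qed.

Lemma integral_lin1 (u : T -> R) (r : R) : measurable_fun setT u ->
  (forall x, 0 <= u x)%R -> (0 <= r)%R ->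
  \int[mu]_x (r * u x)%:E = r%:E * \int[mu]_x (u x)%:E.
Proof.
move=> mu' u0 r0.
have muE : measurable_fun setT (fun x => (u x)%:E) by exact/measurable_EFinP.
have u0E : forall x, setT x -> 0 <= (u x)%:E by move=> x _; rewrite lee_fin.
under eq_integral do rewrite EFinM.
by rewrite ge0_integralZl_EFin.
Qed.

Lemma ae_fin_of_int (h : T -> \bar R) (r : R) : measurable_fun setT h ->
  (forall x, 0 <= h x) -> \int[mu]_x h x <= r%:E ->
  {ae mu, forall x, h x \is a fin_num}.
Proof.
move=> mh h0 hr.
have hi : mu.-integrable setT h.
  apply/integrableP; split => //.
  rewrite (eq_integral h); last by move=> x _; rewrite gee0_abs.
  exact: le_lt_trans hr (ltry _).
by apply: filterS (integrable_ae measurableT hi) => x; apply.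
Qed.

Lemma ge0_notfin_fine (x : \bar R) : 0 <= x -> x \isn't a fin_num -> fine x = 0%R.
Proof. by case: x. Qed.

End Generic.
Arguments ge0_notfin_fine {R}.
Section Inner.
Context (R : realType) (d2 dw : measure_display)
  (Z2 : measurableType d2) (W : measurableType dw)
  (mu2 : {sigma_finite_measure set Z2 -> \bar R})
  (nu : {sigma_finite_measure set W -> \bar R}).
Variables (a K m m' : R) (f g : Z2 -> R) (q : Z2 -> W -> R).
Hypotheses (a1 : 1 < a) (mf : measurable_fun setT f) (mg : measurable_fun setT g)
  (f0 : forall z, 0 <= f z) (g0 : forall z, 0 <= g z)
  (mq : measurable_fun setT (fun x : Z2 * W => q x.1 x.2))
  (q0 : forall z w, 0 <= q z w)
  (q1 : forall z, (\int[nu]_w (q z w)%:E = 1)%E)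
  (hK : forall z z', (\int[nu]_w Phi a (q z w) (q z' w) <= K%:E)%E)
  (K0 : 0 <= K) (m0 : 0 < m) (m'0 : 0 < m')
  (hm : (\int[mu2]_z (f z)%:E = m%:E)%E) (hm' : (\int[mu2]_z (g z)%:E = m'%:E)%E).

Local Open Scope ereal_scope.

Lemma mq_comp dx (X : measurableType dx) (hz : X -> Z2) (hw : X -> W) :
  measurable_fun setT hz -> measurable_fun setT hw ->
  measurable_fun setT (fun x => q (hz x) (hw x)).
Proof.
move=> mz mw.
exact: (measurableT_comp (f := fun y : Z2 * W => q y.1 y.2)
  (g := fun x => (hz x, hw x)) mq (measurable_fun_pair mz mw)).
Qed.

Definition Pe w := \int[mu2]_z (f z * q z w)%:E.
Definition Qe w := \int[mu2]_z (g z * q z w)%:E.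
Definition kk := (m' `^ (- a) * m `^ (a - 1))%R.
Definition GG (x : (W * Z2) * Z2) : \bar R :=
  (f x.1.2 * g x.2)%:E * Phi a (q x.1.2 x.1.1) (q x.2 x.1.1).
Definition RH w := \int[mu2]_z \int[mu2]_z' GG ((w, z), z').

Lemma a0 : (0 < a)%R. Proof. exact: lt_trans ltr01 a1. Qed.
Lemma kk0 : (0 < kk)%R. Proof. by rewrite mulr_gt0 ?powR_gt0. Qed.

Lemma mGG : measurable_fun setT GG.
Proof.
apply: emeasurable_funM.
  apply/measurable_EFinP; apply: measurable_funM.
    exact: (measurableT_comp mf (measurableT_comp measurable_snd measurable_fst)).
  exact: (measurableT_comp mg measurable_snd).
apply: measurable_Phi; apply: mq_comp.
- exact: (measurableT_comp measurable_snd measurable_fst).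
- exact: (measurableT_comp measurable_fst measurable_fst).
- exact: measurable_snd.
- exact: (measurableT_comp measurable_fst measurable_fst).
Qed.

Lemma GG0 x : 0 <= GG x.
Proof. by rewrite /GG mule_ge0 ?Phi_ge0 // lee_fin mulr_ge0. Qed.

Lemma mGGw w : measurable_fun setT (fun zz : Z2 * Z2 => GG ((w, zz.1), zz.2)).
Proof.
apply: (measurableT_comp (f := GG) (g := fun zz : Z2 * Z2 => ((w, zz.1), zz.2)) mGG).
apply: measurable_fun_pair; last exact: measurable_snd.
apply: measurable_fun_pair; last exact: measurable_fst.
exact: measurable_cst.
Qed.

Lemma mGGwz w z : measurable_fun setT (fun z' => GG ((w, z), z')).
Proof.
exact: (measurable_fun_pair2 z (mGGw w)).
Qed.

Lemma mRHinner w : measurable_fun setT (fun z => \int[mu2]_z' GG ((w, z), z')).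
Proof.
exact: (measurable_fun_fubini_tonelli_F (m2 := mu2)
  (fun zz : Z2 * Z2 => GG ((w, zz.1), zz.2)) (mGGw w) (fun _ => GG0 _)).
Qed.

Lemma mqw w : measurable_fun setT (fun z => q z w).
Proof. by apply: mq_comp => //; exact: measurable_cst. Qed.

Lemma inner_z w z c : (0 <= c)%R -> Qe w \is a fin_num ->
  ((f z * (c `^ a / m) * fine (Qe w) + f z * (a * c `^ (a - 1) / m') * q z w * m')%:E
   <= kk%:E * \int[mu2]_z' GG ((w, z), z') + (f z * (a * c `^ a / m) * fine (Qe w))%:E).
Proof.
move=> c0 Qfin.
have a0' : (0 <= a)%R := ltW a0.
have kk0' : (0 <= kk)%R := ltW kk0.
have m0' : (0 <= m)%R := ltW m0.
have m'0' : (0 <= m')%R := ltW m'0.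
set Q := fine (Qe w).
have eQ : Qe w = Q%:E by rewrite fineK.
have A0 : (0 <= f z * (c `^ a / m))%R by rewrite mulr_ge0 // divr_ge0 ?powR_ge0 // ltW.
have B0 : (0 <= f z * (a * c `^ (a - 1) / m') * q z w)%R.
  by rewrite !mulr_ge0 // ?invr_ge0 ?powR_ge0 // ltW // a0.
have A20 : (0 <= f z * (a * c `^ a / m))%R.
  by rewrite !mulr_ge0 // ?invr_ge0 ?powR_ge0 // ltW // a0.
have mgq : measurable_fun setT (fun z' => g z' * q z' w)%R.
  by apply: measurable_funM => //; exact: mqw.
have gq0 : forall z', (0 <= g z' * q z' w)%R by move=> z'; rewrite mulr_ge0.
have eL : ((f z * (c `^ a / m) * Q + f z * (a * c `^ (a - 1) / m') * q z w * m')%:E) =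
  \int[mu2]_z' ((f z * (c `^ a / m)) * (g z' * q z' w) +
                (f z * (a * c `^ (a - 1) / m') * q z w) * g z')%:E.
  rewrite integral_lin2 //.
  by rewrite -/(Qe w) eQ hm' -!EFinM -EFinD.
have eR : kk%:E * \int[mu2]_z' GG ((w, z), z') + (f z * (a * c `^ a / m) * Q)%:E =
  \int[mu2]_z' (kk%:E * GG ((w, z), z') + ((f z * (a * c `^ a / m)) * (g z' * q z' w))%:E).
  have e1 : forall z', setT z' -> 0 <= kk%:E * GG ((w, z), z').
    by move=> z' _; rewrite mule_ge0 ?GG0 // lee_fin.
  have e2 : measurable_fun setT (fun z' => kk%:E * GG ((w, z), z')).
    by apply: emeasurable_funM; [exact: measurable_cst|exact: mGGwz].
  have e3 : forall z', setT z' -> 0 <= ((f z * (a * c `^ a / m)) * (g z' * q z' w))%:E.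
    by move=> z' _; rewrite lee_fin mulr_ge0.
  have e4 : measurable_fun setT (fun z' => ((f z * (a * c `^ a / m)) * (g z' * q z' w))%:E).
    by apply/measurable_EFinP; apply: measurable_funM => //; exact: measurable_cst.
  have e5 : forall z', setT z' -> 0 <= GG ((w, z), z') by move=> z' _; exact: GG0.
  have e6 := mGGwz w z.
  rewrite ge0_integralD // ge0_integralZl_EFin //.
  by rewrite integral_lin1 // -/(Qe w) eQ -EFinM.
have h1 : forall z', setT z' -> 0 <= ((f z * (c `^ a / m)) * (g z' * q z' w) +
                (f z * (a * c `^ (a - 1) / m') * q z w) * g z')%:E.
  by move=> z' _; rewrite lee_fin addr_ge0 // mulr_ge0.
have h2 : measurable_fun setT (fun z' => ((f z * (c `^ a / m)) * (g z' * q z' w) +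
                (f z * (a * c `^ (a - 1) / m') * q z w) * g z')%:E).
  apply/measurable_EFinP; apply: measurable_funD.
    by apply: measurable_funM => //; exact: measurable_cst.
  by apply: measurable_funM => //; exact: measurable_cst.
have h3 : forall z', setT z' -> 0 <= kk%:E * GG ((w, z), z') +
   ((f z * (a * c `^ a / m)) * (g z' * q z' w))%:E.
  move=> z' _; apply: adde_ge0; last by rewrite lee_fin mulr_ge0.
  by apply: mule_ge0; [rewrite lee_fin ltW // kk0|exact: GG0].
have h4 : measurable_fun setT (fun z' => kk%:E * GG ((w, z), z') +
   ((f z * (a * c `^ a / m)) * (g z' * q z' w))%:E).
  apply: emeasurable_funD.
    by apply: emeasurable_funM; [exact: measurable_cst|exact: mGGwz].
  by apply/measurable_EFinP; apply: measurable_funM => //; exact: measurable_cst.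
rewrite eL eR; apply: ge0_le_integral => //.
move=> z' _.
have T := @Phi_tangent R a (q z w) (q z' w) c m m' a1 (q0 _ _) (q0 _ _) c0 m0 m'0.
have fg0 : 0 <= (f z * g z')%:E by rewrite lee_fin mulr_ge0.
have := lee_wpmul2l fg0 T.
rewrite ge0_muleDr; last 2 first.
- by apply: mule_ge0; [rewrite lee_fin; exact: kk0'|exact: Phi_ge0].
- rewrite lee_fin; apply: mulr_ge0; first by rewrite mulr_ge0 ?powR_ge0.
  by rewrite divr_ge0.
rewrite muleCA -/kk -EFinM -EFinM.
have -> : (f z * g z' * (c `^ a * (q z' w / m) + a * c `^ (a - 1) * (q z w / m')) =
  f z * (c `^ a / m) * (g z' * q z' w) + f z * (a * c `^ (a - 1) / m') * q z w * g z')%R.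
  by ring.
have -> : (f z * g z' * (a * c `^ a * (q z' w / m)) =
  f z * (a * c `^ a / m) * (g z' * q z' w))%R by ring.
by [].
Qed.

Lemma inner_w w c : (0 <= c)%R -> Pe w \is a fin_num -> Qe w \is a fin_num ->
  ((c `^ a * fine (Qe w) + a * c `^ (a - 1) * fine (Pe w))%:E
   <= kk%:E * RH w + (a * c `^ a * fine (Qe w))%:E).
Proof.
move=> c0 Pfin Qfin.
have a0' : (0 <= a)%R := ltW a0.
have kk0' : (0 <= kk)%R := ltW kk0.
have m0' : (0 <= m)%R := ltW m0.
have m'0' : (0 <= m')%R := ltW m'0.
set Q := fine (Qe w); set P := fine (Pe w).
have Q0 : (0 <= Q)%R.
  by rewrite /Q fine_ge0 // integral_ge0 // => z _; rewrite lee_fin mulr_ge0.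
have eQ : Qe w = Q%:E by rewrite fineK.
have eP : Pe w = P%:E by rewrite fineK.
have mfq : measurable_fun setT (fun z => f z * q z w)%R.
  by apply: measurable_funM => //; exact: mqw.
have fq0 : forall z, (0 <= f z * q z w)%R by move=> z; rewrite mulr_ge0.
have r10 : (0 <= c `^ a / m * Q)%R by rewrite !mulr_ge0 ?powR_ge0 ?invr_ge0.
have r20 : (0 <= a * c `^ (a - 1) / m' * m')%R by rewrite !mulr_ge0 ?powR_ge0 ?invr_ge0.
have r30 : (0 <= a * c `^ a / m * Q)%R by rewrite !mulr_ge0 ?powR_ge0 ?invr_ge0.
have eL : ((c `^ a * Q + a * c `^ (a - 1) * P)%:E) = \int[mu2]_z
  ((c `^ a / m * Q) * f z + (a * c `^ (a - 1) / m' * m') * (f z * q z w))%:E.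
  rewrite integral_lin2 // hm -/(Pe w) eP -!EFinM -EFinD.
  congr (_%:E); field.
  by rewrite !gt_eqF.
have eR : kk%:E * RH w + (a * c `^ a * Q)%:E = \int[mu2]_z
  (kk%:E * \int[mu2]_z' GG ((w, z), z') + ((a * c `^ a / m * Q) * f z)%:E).
  have e1 : forall z, setT z -> 0 <= kk%:E * \int[mu2]_z' GG ((w, z), z').
    by move=> z _; rewrite mule_ge0 ?lee_fin // integral_ge0 // => z' _; exact: GG0.
  have e2 : measurable_fun setT (fun z => kk%:E * \int[mu2]_z' GG ((w, z), z')).
    by apply: emeasurable_funM; [exact: measurable_cst|exact: mRHinner].
  have e3 : forall z, setT z -> 0 <= ((a * c `^ a / m * Q) * f z)%:E.
    by move=> z _; rewrite lee_fin mulr_ge0.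
  have e4 : measurable_fun setT (fun z => ((a * c `^ a / m * Q) * f z)%:E).
    by apply/measurable_EFinP; apply: measurable_funM => //; exact: measurable_cst.
  have e5 : forall z, setT z -> 0 <= \int[mu2]_z' GG ((w, z), z').
    by move=> z _; rewrite integral_ge0 // => z' _; exact: GG0.
  have e6 := mRHinner w.
  rewrite ge0_integralD // ge0_integralZl_EFin // integral_lin1 // hm -EFinM.
  congr (_ + _%:E); field.
  by rewrite gt_eqF.
have h1 : forall z, setT z -> 0 <= ((c `^ a / m * Q) * f z +
   (a * c `^ (a - 1) / m' * m') * (f z * q z w))%:E.
  by move=> z _; rewrite lee_fin addr_ge0 // mulr_ge0.
have h2 : measurable_fun setT (fun z => ((c `^ a / m * Q) * f z +
   (a * c `^ (a - 1) / m' * m') * (f z * q z w))%:E).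
  apply/measurable_EFinP; apply: measurable_funD.
    by apply: measurable_funM => //; exact: measurable_cst.
  by apply: measurable_funM => //; exact: measurable_cst.
have h3 : forall z, setT z -> 0 <= kk%:E * \int[mu2]_z' GG ((w, z), z') +
   ((a * c `^ a / m * Q) * f z)%:E.
  move=> z _; apply: adde_ge0; last by rewrite lee_fin mulr_ge0.
  by rewrite mule_ge0 ?lee_fin // integral_ge0 // => z' _; exact: GG0.
have h4 : measurable_fun setT (fun z => kk%:E * \int[mu2]_z' GG ((w, z), z') +
   ((a * c `^ a / m * Q) * f z)%:E).
  apply: emeasurable_funD.
    by apply: emeasurable_funM; [exact: measurable_cst|exact: mRHinner].
  by apply/measurable_EFinP; apply: measurable_funM => //; exact: measurable_cst.
rewrite eL eR; apply: ge0_le_integral => //.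
move=> z _.
have := @inner_z w z c c0 Qfin.
rewrite -/Q; congr (_%:E <= _ + _%:E); ring.
Qed.

Lemma Pe0 w : 0 <= Pe w.
Proof. by apply: integral_ge0 => z _; rewrite lee_fin mulr_ge0. Qed.
Lemma Qe0 w : 0 <= Qe w.
Proof. by apply: integral_ge0 => z _; rewrite lee_fin mulr_ge0. Qed.
Lemma RH0 w : 0 <= RH w.
Proof. by apply: integral_ge0 => z _; apply: integral_ge0 => z' _; exact: GG0. Qed.

Lemma point_bound w : (phi a (fine (Pe w)) (fine (Qe w)))%:E <= kk%:E * RH w.
Proof.
have a0' : (0 <= a)%R := ltW a0.
have Y0 : 0 <= kk%:E * RH w by rewrite mule_ge0 ?RH0 // lee_fin ltW // kk0.
have [Pfin|Pnfin] := boolP (Pe w \is a fin_num); last first.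
  by rewrite (ge0_notfin_fine _ (Pe0 w) Pnfin) phi0l // gt_eqF // a0.
have [Qfin|Qnfin] := boolP (Qe w \is a fin_num); last first.
  by rewrite (ge0_notfin_fine _ (Qe0 w) Qnfin) phi0r // gt_eqF.
set P := fine (Pe w); set Q := fine (Qe w).
have P0 : (0 <= P)%R by rewrite fine_ge0 // Pe0.
have Q0 : (0 <= Q)%R by rewrite fine_ge0 // Qe0.
have [->|Qn0] := eqVneq Q 0%R; first by rewrite phi0r // gt_eqF.
have Qp : (0 < Q)%R by rewrite lt_neqAle eq_sym Qn0.
set c := (P / Q)%R.
have c0 : (0 <= c)%R by rewrite divr_ge0.
have := @inner_w w c c0 Pfin Qfin.
rewrite -/P -/Q.
have eP : P = (c * Q)%R by rewrite /c divfK.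
have e1 : (c `^ (a - 1) * P = c `^ a * Q)%R.
  by rewrite eP mulrA (mulrC (c `^ (a - 1))%R) mulr_powRB1 // a0.
rewrite -mulrA e1 phi_scale_pos // -/c.
have [Yfin|Ynfin] := boolP (kk%:E * RH w \is a fin_num); last first.
  move=> _; have -> : kk%:E * RH w = +oo by move: Ynfin; rewrite ge0_fin_numE // ltey negbK => /eqP.
  exact: leey.
rewrite -(fineK Yfin) -EFinD !lee_fin.
move: (fine _) => y; move: (c `^ a)%R => C h; nra.
Qed.

Lemma ae_point w : Pe w \is a fin_num -> Qe w \is a fin_num -> RH w \is a fin_num ->
  fine (Qe w) = 0%R -> fine (Pe w) = 0%R.
Proof.
move=> Pfin Qfin Rfin Q0.
have P0 : (0 <= fine (Pe w))%R by rewrite fine_ge0 // Pe0.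
apply/eqP; apply: contraT => Pn0.
have Pp : (0 < fine (Pe w))%R by rewrite lt_neqAle eq_sym Pn0.
set r := fine (RH w).
have r0 : (0 <= r)%R by rewrite fine_ge0 // RH0.
set X := ((kk * r + 1) / (a * fine (Pe w)))%R.
have X0 : (0 < X)%R by rewrite divr_gt0 ?mulr_gt0 ?a0 // ltr_wpDl // mulr_ge0 // ltW // kk0.
set c := (X `^ (a - 1)^-1)%R.
have c0 : (0 <= c)%R by exact: powR_ge0.
have := @inner_w w c c0 Pfin Qfin.
have cX : (c `^ (a - 1) = X)%R.
  by rewrite /c -powRrM mulVf ?gt_eqF ?subr_gt0 // powRr1 // ltW.
rewrite Q0 cX -(fineK Rfin) -/r.
rewrite !mulr0 add0r addr0 -EFinM lee_fin.
have : (a * X * fine (Pe w) = kk * r + 1)%R.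
  by rewrite /X; field; rewrite Pn0 gt_eqF // a0.
move=> ->; lra.
Qed.

Lemma mqz z : measurable_fun setT (fun w => q z w).
Proof. by apply: mq_comp => //; exact: measurable_cst. Qed.

Lemma mPe : measurable_fun setT Pe.
Proof.
apply: (measurable_fun_fubini_tonelli_F (m2 := mu2) (fun x : W * Z2 => (f x.2 * q x.2 x.1)%:E)).
  apply/measurable_EFinP; apply: measurable_funM.
    exact: (measurableT_comp mf measurable_snd).
  by apply: mq_comp; [exact: measurable_snd|exact: measurable_fst].
by move=> x; rewrite lee_fin mulr_ge0.
Qed.

Lemma mQe : measurable_fun setT Qe.
Proof.
apply: (measurable_fun_fubini_tonelli_F (m2 := mu2) (fun x : W * Z2 => (g x.2 * q x.2 x.1)%:E)).
  apply/measurable_EFinP; apply: measurable_funM.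
    exact: (measurableT_comp mg measurable_snd).
  by apply: mq_comp; [exact: measurable_snd|exact: measurable_fst].
by move=> x; rewrite lee_fin mulr_ge0.
Qed.

Lemma mRH1 : measurable_fun setT (fubini_F mu2 GG).
Proof. exact: (measurable_fun_fubini_tonelli_F GG mGG GG0). Qed.

Lemma mRH : measurable_fun setT RH.
Proof.
apply: (measurable_fun_fubini_tonelli_F (m2 := mu2) (fubini_F mu2 GG) mRH1).
by move=> x; apply: integral_ge0 => y _; exact: GG0.
Qed.

Lemma int_Pe : \int[nu]_w Pe w = m%:E.
Proof.
rewrite /Pe (fubini_tonelli (fun x : W * Z2 => (f x.2 * q x.2 x.1)%:E)) /=; last 2 first.
- apply/measurable_EFinP; apply: measurable_funM.
    exact: (measurableT_comp mf measurable_snd).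
  by apply: mq_comp; [exact: measurable_snd|exact: measurable_fst].
- by move=> x; rewrite lee_fin mulr_ge0.
rewrite -hm; apply: eq_integral => z _.
by rewrite integral_lin1 // ?q1 ?mule1 //; exact: mqz.
Qed.

Lemma int_Qe : \int[nu]_w Qe w = m'%:E.
Proof.
rewrite /Qe (fubini_tonelli (fun x : W * Z2 => (g x.2 * q x.2 x.1)%:E)) /=; last 2 first.
- apply/measurable_EFinP; apply: measurable_funM.
    exact: (measurableT_comp mg measurable_snd).
  by apply: mq_comp; [exact: measurable_snd|exact: measurable_fst].
- by move=> x; rewrite lee_fin mulr_ge0.
rewrite -hm'; apply: eq_integral => z _.
by rewrite integral_lin1 // ?q1 ?mule1 //; exact: mqz.
Qed.

Lemma RH_int : \int[nu]_w RH w <= (K * m * m')%:E.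
Proof.
have F0 : forall x, 0 <= fubini_F mu2 GG x.
  by move=> x; apply: integral_ge0 => y _; exact: GG0.
have e1 : \int[nu]_w RH w = \int[mu2]_z \int[nu]_w fubini_F mu2 GG (w, z).
  exact: (fubini_tonelli (fubini_F mu2 GG) mRH1 F0).
rewrite e1.
have mGGz z : measurable_fun setT (fun x : W * Z2 => GG ((x.1, z), x.2)).
  apply: (measurableT_comp (f := GG) (g := fun x : W * Z2 => ((x.1, z), x.2)) mGG).
  apply: measurable_fun_pair; last exact: measurable_snd.
  apply: measurable_fun_pair; first exact: measurable_fst.
  exact: measurable_cst.
have e2 : forall z, \int[nu]_w fubini_F mu2 GG (w, z) =
    \int[mu2]_z' \int[nu]_w GG ((w, z), z').
  move=> z; exact: (fubini_tonelli (fun x : W * Z2 => GG ((x.1, z), x.2)) (mGGz z) (fun _ => GG0 _)).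
have e3 : \int[mu2]_z \int[mu2]_z' ((f z * K) * g z')%:E = (K * m * m')%:E.
  rewrite (eq_integral (fun z => ((K * m') * f z)%:E)); last first.
    move=> z _; rewrite integral_lin1 //; last by rewrite mulr_ge0.
    by rewrite hm' -EFinM; congr (_%:E); ring.
  rewrite integral_lin1 //; last by rewrite mulr_ge0 // ltW.
  by rewrite hm -EFinM; congr (_%:E); ring.
have h1 : forall z, setT z -> 0 <= \int[nu]_w fubini_F mu2 GG (w, z).
  by move=> z _; apply: integral_ge0 => w _; exact: F0.
have h2 : measurable_fun setT (fun z => \int[nu]_w fubini_F mu2 GG (w, z)).
  exact: (measurable_fun_fubini_tonelli_G (m1 := nu) (fubini_F mu2 GG) mRH1 F0).
have h3 : forall z, setT z -> 0 <= \int[mu2]_z' ((f z * K) * g z')%:E.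
  by move=> z _; apply: integral_ge0 => z' _; rewrite lee_fin !mulr_ge0.
have h4 : measurable_fun setT (fun z => \int[mu2]_z' ((f z * K) * g z')%:E).
  apply: (measurable_fun_fubini_tonelli_F (m2 := mu2) (fun x : Z2 * Z2 => ((f x.1 * K) * g x.2)%:E)).
    apply/measurable_EFinP; apply: measurable_funM; last exact: (measurableT_comp mg measurable_snd).
    by apply: measurable_funM; [exact: (measurableT_comp mf measurable_fst)|exact: measurable_cst].
  by move=> x; rewrite lee_fin !mulr_ge0.
rewrite -e3; apply: ge0_le_integral => //.
move=> z _; rewrite e2.
have k1 : forall z', setT z' -> 0 <= \int[nu]_w GG ((w, z), z').
  by move=> z' _; apply: integral_ge0 => w _; exact: GG0.
have k2 : measurable_fun setT (fun z' => \int[nu]_w GG ((w, z), z')).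
  exact: (measurable_fun_fubini_tonelli_G (m1 := nu) _ (mGGz z) (fun _ => GG0 _)).
have k3 : forall z', setT z' -> 0 <= ((f z * K) * g z')%:E.
  by move=> z' _; rewrite lee_fin !mulr_ge0.
have k4 : measurable_fun setT (fun z' => ((f z * K) * g z')%:E).
  by apply/measurable_EFinP; apply: measurable_funM.
apply: ge0_le_integral => //.
move=> z' _; rewrite /GG /=.
rewrite ge0_integralZl //; last 3 first.
- by apply: measurable_Phi; exact: mqz.
- by move=> w _; exact: Phi_ge0.
- by rewrite lee_fin mulr_ge0.
have -> : (f z * K * g z' = (f z * g z') * K)%R by ring.
rewrite EFinM; apply: (lee_wpmul2l _ (hK z z')).
by rewrite lee_fin mulr_ge0.
Qed.

Lemma inner_A : \int[nu]_w (phi a (fine (Pe w)) (fine (Qe w)))%:E <= (K * phi a m m')%:E.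
Proof.
have mfP : measurable_fun setT (fun w => fine (Pe w)).
  exact: (measurableT_comp (fine_measurable measurableT) mPe).
have mfQ : measurable_fun setT (fun w => fine (Qe w)).
  exact: (measurableT_comp (fine_measurable measurableT) mQe).
have h1 : forall w, setT w -> 0 <= (phi a (fine (Pe w)) (fine (Qe w)))%:E.
  by move=> w _; rewrite lee_fin phi_ge0.
have h2 : measurable_fun setT (fun w => (phi a (fine (Pe w)) (fine (Qe w)))%:E).
  by apply/measurable_EFinP; exact: measurable_phi.
have h3 : forall w, setT w -> 0 <= kk%:E * RH w.
  by move=> w _; rewrite mule_ge0 ?RH0 // lee_fin ltW // kk0.
have h4 : measurable_fun setT (fun w => kk%:E * RH w).
  by apply: emeasurable_funM; [exact: measurable_cst|exact: mRH].
have step : \int[nu]_w (phi a (fine (Pe w)) (fine (Qe w)))%:E <= \int[nu]_w (kk%:E * RH w).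
  by apply: ge0_le_integral => // w _; exact: point_bound.
apply: (le_trans step).
have h5 : forall w, setT w -> 0 <= RH w by move=> w _; exact: RH0.
have h6 := mRH.
have h7 : (0 <= kk)%R := ltW kk0.
rewrite ge0_integralZl_EFin //.
apply: (le_trans (lee_wpmul2l _ RH_int)); first by rewrite lee_fin ltW // kk0.
rewrite -EFinM lee_fin le_eqVlt; apply/orP; left; apply/eqP.
rewrite /kk /phi.
have e1 : (m * m `^ (a - 1) = m `^ a)%R by rewrite mulr_powRB1 // ?ltW // a0.
have e2 : (m' * m' `^ (- a) = m' `^ (1 - a))%R.
  rewrite powRD ?powRr1 //; first exact: ltW.
  by apply/implyP => _; rewrite gt_eqF.
rewrite -e1 -e2; ring.
Qed.

Lemma inner_B : {ae nu, forall w, fine (Qe w) = 0%R -> fine (Pe w) = 0%R}.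
Proof.
have iP : \int[nu]_w Pe w <= m%:E by rewrite int_Pe.
have iQ : \int[nu]_w Qe w <= m'%:E by rewrite int_Qe.
have hP := @ae_fin_of_int R _ W nu Pe m mPe Pe0 iP.
have hQ := @ae_fin_of_int R _ W nu Qe m' mQe Qe0 iQ.
have hR := @ae_fin_of_int R _ W nu RH (K * m * m') mRH RH0 RH_int.
apply: filterS3 hP hQ hR => w hp hq hr.
exact: ae_point.
Qed.

End Inner.
Section Generic2.
Context (R : realType) d (T : measurableType d) (mu : {measure set T -> \bar R}).
Local Open Scope ereal_scope.

Lemma zero_mul_int (f h : T -> R) : measurable_fun setT f -> measurable_fun setT h ->
  (forall x, 0 <= f x)%R -> (forall x, 0 <= h x)%R ->
  \int[mu]_x (f x)%:E = 0 -> \int[mu]_x (f x * h x)%:E = 0.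
Proof.
move=> mf mh f0 h0 If.
have mfE : measurable_fun setT (fun x => (f x)%:E) by exact/measurable_EFinP.
have : \int[mu]_x `|(f x)%:E| = 0.
  by rewrite (eq_integral (fun x => (f x)%:E)) // => x _; rewrite gee0_abs // lee_fin.
move/(ae_eq_integral_abs mu measurableT mfE) => hae.
rewrite (ae_eq_integral (cst 0)) //.
- by rewrite integral0.
- by apply/measurable_EFinP; exact: measurable_funM.
apply: filterS hae => x hx _; rewrite /cst.
have := hx I; rewrite /cst => /(congr1 fine) /= ->.
by rewrite mul0r.
Qed.

Lemma density_inhabited (p : T -> R) : is_density mu p -> exists x : T, True.
Proof.
move=> [_ _ h]; apply: contrapT => hn.
have hT : [set: T] = set0.
  by apply/seteqP; split => x // _; apply: hn; exists x.
move: h; rewrite hT integral_set0.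
by move=> [] /eqP; rewrite eq_sym oner_eq0.
Qed.

End Generic2.

Section Marg.
Context (R : realType) (d1 d2 : measure_display)
  (Z1 : measurableType d1) (Z2 : measurableType d2)
  (mu1 : {sigma_finite_measure set Z1 -> \bar R})
  (mu2 : {sigma_finite_measure set Z2 -> \bar R}).
Variable (p : Z1 * Z2 -> R).
Hypothesis hp : is_density (mu1 \x mu2)%E p.
Local Open Scope ereal_scope.

Definition Me z1 := \int[mu2]_z2 (p (z1, z2))%:E.

Lemma mpE : measurable_fun setT (fun x => (p x)%:E).
Proof. by case: hp => mp _ _; exact/measurable_EFinP. Qed.

Lemma p0E x : 0 <= (p x)%:E.
Proof. by case: hp => _ p0 _; rewrite lee_fin. Qed.

Lemma mMe : measurable_fun setT Me.
Proof. exact: (measurable_fun_fubini_tonelli_F (m2 := mu2) _ mpE p0E). Qed.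

Lemma Me0 z1 : 0 <= Me z1.
Proof. by apply: integral_ge0 => z _; exact: p0E. Qed.

Lemma int_Me : \int[mu1]_z1 Me z1 = 1.
Proof.
case: hp => _ _ <-.
by rewrite (fubini_tonelli1 (fun x => (p x)%:E) mpE p0E).
Qed.

Lemma ae_Me_fin : {ae mu1, forall z1, Me z1 \is a fin_num}.
Proof.
apply: (@ae_fin_of_int R _ Z1 mu1 Me 1%R mMe Me0).
by rewrite int_Me.
Qed.

Lemma marg_density : is_density mu1 (fun z1 => fine (Me z1)).
Proof.
split.
- exact: (measurableT_comp (fine_measurable measurableT) mMe).
- by move=> z1; rewrite fine_ge0 // Me0.
rewrite -int_Me; apply: ae_eq_integral => //.
- apply/measurable_EFinP.
  exact: (measurableT_comp (fine_measurable measurableT) mMe).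
- exact: mMe.
by apply: filterS ae_Me_fin => z1 h _; rewrite fineK.
Qed.

End Marg.

Theorem theoremB1 (R : realType) (Dat : Type) (adj : Dat -> Dat -> Prop)
  (d1 d2 dw : measure_display)
  (Z1 : measurableType d1) (Z2 : measurableType d2) (W : measurableType dw)
  (mu1 : {sigma_finite_measure set Z1 -> \bar R})
  (mu2 : {sigma_finite_measure set Z2 -> \bar R})
  (nu : {sigma_finite_measure set W -> \bar R})
  (alpha eps1 eps2 : R)
  (pA : Dat -> Z1 * Z2 -> R) (qB : Z1 -> Z2 -> W -> R) :
  (forall D D', adj D D' -> adj D' D) ->
  1 < alpha ->
  (forall D, is_density (mu1 \x mu2)%E (pA D)) ->
  measurable_fun setT (fun x : (Z1 * Z2) * W => qB x.1.1 x.1.2 x.2) ->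
  (forall z1 z2, is_density nu (qB z1 z2)) ->
  (forall D D', adj D D' ->
     (renyi_div mu1 alpha (marginal1 mu2 pA D) (marginal1 mu2 pA D')
        <= eps1%:E)%E) ->
  (forall z1 z2 z2',
     (renyi_div nu alpha (qB z1 z2) (qB z1 z2') <= eps2%:E)%E) ->
  forall D D', adj D D' ->
    (renyi_div (mu1 \x nu)%E alpha (out_density mu2 pA qB D)
                                   (out_density mu2 pA qB D')
       <= (eps1 + eps2)%:E)%E.
Proof.
move=> hsym a1 hA mqB hqB h1 h2 D D' hadj.
set K := expR ((alpha - 1) * eps2).
set L := expR ((alpha - 1) * eps1).
have K0 : 0 <= K by exact: expR_ge0.
have L0 : 0 <= L by exact: expR_ge0.
have [[z01 z02] _] := @density_inhabited R _ _ _ (pA D) (hA D).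
have e20 : 0 <= eps2.
  have := @renyi_ge0 R _ _ nu alpha (qB z01 z02) (qB z01 z02) a1 (hqB _ _) (hqB _ _).
  by move/le_trans => /(_ _ (h2 z01 z02 z02)); rewrite lee_fin.
have hmD := @marg_density R d1 d2 Z1 Z2 mu1 mu2 (pA D) (hA D).
have hmD' := @marg_density R d1 d2 Z1 Z2 mu1 mu2 (pA D') (hA D').
have e10 : 0 <= eps1.
  have := @renyi_ge0 R _ _ mu1 alpha _ _ a1 hmD hmD'.
  by move/le_trans => /(_ _ (h1 D D' hadj)); rewrite lee_fin.
have [aeM I1] := @renyi_extract R _ _ mu1 alpha _ _ eps1 a1 (h1 D D' hadj).
have mqz : forall z1 z, measurable_fun setT (fun w => qB z1 z w).
  move=> z1 z.
  apply: (measurableT_comp (f := fun x : (Z1 * Z2) * W => qB x.1.1 x.1.2 x.2)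
    (g := fun w => ((z1, z), w)) mqB).
  by apply: measurable_fun_pair => //; exact: measurable_cst.
have hKz : forall z1 z z', (\int[nu]_w Phi alpha (qB z1 z w) (qB z1 z' w) <= K%:E)%E.
  move=> z1 z z'.
  have [ae2 I2] := @renyi_extract R _ _ nu alpha _ _ eps2 a1 (h2 z1 z z').
  apply: le_trans I2; apply: ae_ge0_le_integral => //.
  - by move=> w _; exact: Phi_ge0.
  - by apply: measurable_Phi; exact: mqz.
  - by move=> w _; rewrite lee_fin phi_ge0.
  - by apply/measurable_EFinP; apply: measurable_phi; exact: mqz.
  apply: filterS ae2 => w hw _; rewrite /Phi.
  case: ifPn => [/andP[/eqP h0 hp]|_] //.
  by move: hp; rewrite (hw h0) ltxx.
have mFD : forall E, measurable_fun setT
    (fun x : (Z1 * W) * Z2 => (pA E (x.1.1, x.2) * qB x.1.1 x.2 x.1.2)%:E).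
  move=> E; apply/measurable_EFinP; apply: measurable_funM.
    case: (hA E) => mp _ _.
    apply: (measurableT_comp (f := pA E) (g := fun x : (Z1 * W) * Z2 => (x.1.1, x.2)) mp).
    apply: measurable_fun_pair; last exact: measurable_snd.
    exact: (measurableT_comp measurable_fst measurable_fst).
  apply: (measurableT_comp (f := fun x : (Z1 * Z2) * W => qB x.1.1 x.1.2 x.2)
    (g := fun x : (Z1 * W) * Z2 => ((x.1.1, x.2), x.1.2)) mqB).
  apply: measurable_fun_pair; last exact: (measurableT_comp measurable_snd measurable_fst).
  apply: measurable_fun_pair; last exact: measurable_snd.
  exact: (measurableT_comp measurable_fst measurable_fst).
have FD0 : forall E (x : (Z1 * W) * Z2), (0 <= (pA E (x.1.1, x.2) * qB x.1.1 x.2 x.1.2)%:E)%E.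
  move=> E x; rewrite lee_fin mulr_ge0 //.
    by case: (hA E) => _ p0 _.
  by case: (hqB x.1.1 x.2) => _ q0 _.
have mOut : forall E, measurable_fun setT (out_density mu2 pA qB E).
  move=> E.
  exact: (measurableT_comp (fine_measurable measurableT)
    (measurable_fun_fubini_tonelli_F (m2 := mu2) _ (mFD E) (FD0 E))).
set P := out_density mu2 pA qB D.
set Q := out_density mu2 pA qB D'.
have mP : measurable_fun setT P := mOut D.
have mQ : measurable_fun setT Q := mOut D'.
have hfD := @ae_Me_fin R d1 d2 Z1 Z2 mu1 mu2 (pA D) (hA D).
have hfD' := @ae_Me_fin R d1 d2 Z1 Z2 mu1 mu2 (pA D') (hA D').
have per : forall z1, (marginal1 mu2 pA D' z1 = 0 -> marginal1 mu2 pA D z1 = 0) ->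
    (\int[mu2]_z (pA D (z1, z))%:E)%E \is a fin_num ->
    (\int[mu2]_z (pA D' (z1, z))%:E)%E \is a fin_num ->
    (\int[nu]_w (phi alpha (P (z1, w)) (Q (z1, w)))%:E <=
       (K * phi alpha (marginal1 mu2 pA D z1) (marginal1 mu2 pA D' z1))%:E)%E /\
    {ae nu, forall w, Q (z1, w) = 0 -> P (z1, w) = 0}.
  move=> z1 hM hfin hfin'; rewrite /marginal1 in hM *.
  set M := (\int[mu2]_z (pA D (z1, z))%:E)%E in hM hfin *.
  set M' := (\int[mu2]_z (pA D' (z1, z))%:E)%E in hM hfin' *.
  have [mp p0 _] := hA D; have [mp' p0' _] := hA D'.
  have mf : measurable_fun setT (fun z => pA D (z1, z)) by exact: measurable_fun_pair2.
  have mg : measurable_fun setT (fun z => pA D' (z1, z)) by exact: measurable_fun_pair2.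
  have mq : measurable_fun setT (fun x : Z2 * W => qB z1 x.1 x.2).
    apply: (measurableT_comp (f := fun x : (Z1 * Z2) * W => qB x.1.1 x.1.2 x.2)
      (g := fun x : Z2 * W => ((z1, x.1), x.2)) mqB).
    apply: measurable_fun_pair; last exact: measurable_snd.
    by apply: measurable_fun_pair => //; exact: measurable_cst.
  have q0 : forall z w, 0 <= qB z1 z w by move=> z w; case: (hqB z1 z) => _ ->.
  have q1 : forall z, (\int[nu]_w (qB z1 z w)%:E = 1)%E by move=> z; case: (hqB z1 z).
  have mz0 : 0 <= fine M by rewrite fine_ge0 // integral_ge0 // => z _; rewrite lee_fin.
  have m'z0 : 0 <= fine M' by rewrite fine_ge0 // integral_ge0 // => z _; rewrite lee_fin.
  have [mzE|mzn0] := eqVneq (fine M) 0.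
    have M0 : M = 0%E by rewrite -(fineK hfin) mzE.
    have P0 : forall w, P (z1, w) = 0.
      move=> w; rewrite /P /out_density /=.
      by rewrite (@zero_mul_int R _ Z2 mu2 (fun z => pA D (z1, z)) (fun z => qB z1 z w)
        mf (measurable_fun_pair1 w mq) (fun z => p0 _) (fun z => q0 z w) M0).
    split; last by apply: aeW => w _; exact: P0.
    rewrite mzE phi0l ?mulr0 ?gt_eqF ?(lt_trans ltr01) //.
    rewrite (eq_integral (cst 0%E)); first by rewrite integral0.
    by move=> w _; rewrite P0 phi0l // gt_eqF // (lt_trans ltr01).
  have mzp : 0 < fine M by rewrite lt_neqAle eq_sym mzn0.
  have m'zp : 0 < fine M'.
    rewrite lt_neqAle m'z0 andbT eq_sym; apply/eqP => h0.
    by move/eqP: mzn0; apply; apply: hM.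
  have hm : (\int[mu2]_z (pA D (z1, z))%:E = (fine M)%:E)%E by rewrite fineK.
  have hm' : (\int[mu2]_z (pA D' (z1, z))%:E = (fine M')%:E)%E by rewrite fineK.
  split.
    exact: (@inner_A R d2 dw Z2 W mu2 nu alpha K (fine M) (fine M')
      (fun z => pA D (z1, z)) (fun z => pA D' (z1, z)) (fun z w => qB z1 z w)
      a1 mf mg (fun z => p0 _) (fun z => p0' _) mq q0 (hKz z1) K0 mzp m'zp hm hm').
  exact: (@inner_B R d2 dw Z2 W mu2 nu alpha K (fine M) (fine M')
      (fun z => pA D (z1, z)) (fun z => pA D' (z1, z)) (fun z w => qB z1 z w)
      a1 mf mg (fun z => p0 _) (fun z => p0' _) mq q0 q1 (hKz z1) K0 mzp m'zp hm hm').
have Fo0 : forall zw : Z1 * W, (0 <= (phi alpha (P zw) (Q zw))%:E)%E.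
  by move=> zw; rewrite lee_fin phi_ge0.
have mFo : measurable_fun setT (fun zw : Z1 * W => (phi alpha (P zw) (Q zw))%:E).
  by apply/measurable_EFinP; exact: measurable_phi.
have [mm _ _] := hmD; have [mm' _ _] := hmD'.
have bound : (\int[(mu1 \x nu)%E]_zw (phi alpha (P zw) (Q zw))%:E <= (K * L)%:E)%E.
  rewrite (fubini_tonelli1 _ mFo Fo0).
  have step : (\int[mu1]_z1 fubini_F nu (fun zw : Z1 * W => (phi alpha (P zw) (Q zw))%:E) z1
     <= \int[mu1]_z1 (K * phi alpha (marginal1 mu2 pA D z1) (marginal1 mu2 pA D' z1))%:E)%E.
    apply: ae_ge0_le_integral => //.
    - by move=> z1 _; apply: integral_ge0 => w _; exact: Fo0.
    - exact: (measurable_fun_fubini_tonelli_F (m2 := nu) _ mFo Fo0).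
    - by move=> z1 _; rewrite lee_fin mulr_ge0 // phi_ge0.
    - apply/measurable_EFinP; apply: measurable_funM; first exact: measurable_cst.
      exact: measurable_phi.
    apply: filterS3 aeM hfD hfD' => z1 hM hfin hfin' _.
    by have [] := per z1 hM hfin hfin'.
  apply: (le_trans step).
  rewrite integral_lin1 //; last by move=> z1; exact: phi_ge0.
    by rewrite EFinM; apply: lee_wpmul2l; rewrite ?lee_fin.
  exact: measurable_phi.
have AC : {ae (mu1 \x nu)%E, forall x, Q x = 0 -> P x = 0}.
  set N := [set x | Q x = 0 /\ P x <> 0].
  have mN : measurable N.
    have hb : measurable_fun setT (fun x => (Q x == 0) && ~~ (P x == 0)).
      apply: measurable_and; first by apply: measurable_fun_eqr => //; exact: measurable_cst.
      by apply: measurable_neg; apply: measurable_fun_eqr => //; exact: measurable_cst.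
    have -> : N = setT `&` (fun x => (Q x == 0) && ~~ (P x == 0)) @^-1` [set true].
      apply/seteqP; split => x /=.
        by move=> [Q0 Pn0]; split => //; rewrite Q0 eqxx /=; apply/eqP.
      by move=> [_ /andP[/eqP Q0 /eqP Pn0]].
    exact: hb.
  exists N; split => //; last first.
    by move=> x /= /not_implyP [h0 h1']; split.
  apply/eqP; rewrite eq_le measure_ge0 andbT.
  have : ((mu1 \x nu)%E N <= \int[mu1]_z1 (cst 0%E) z1)%E.
    have k1 : forall z1, setT z1 -> (0 <= (nu \o xsection N) z1)%E.
      by move=> z1 _; exact: measure_ge0.
    have k2 := measurable_fun_xsection nu mN.
    apply: ae_ge0_le_integral => //.
    apply: filterS3 aeM hfD hfD' => z1 hM hfin hfin' _.
    have [_ aew] := per z1 hM hfin hfin'.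
    have [N' [mN' N'0 sub]] := aew.
    rewrite /cst /= -N'0; apply: le_measure.
    - by rewrite inE; exact: measurable_xsection.
    - by rewrite inE.
    move=> w; rewrite /xsection /= inE => -[h0 h1']; apply: sub => /=.
    by move=> /(_ h0).
  by rewrite integral0.
apply: renyi_bound => //.
  exact: addr_ge0.
apply: (le_trans bound); rewrite lee_fin /K /L -expRD.
by rewrite mulrDr addrC.
Qed.
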